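(* Let $q$ be a prime. For any integer $W\leqslant q$ and integers $a,h$ with $\gcd(ah,q)=1$ we have $$\sum_{w=1}^{W}\sum_{\substack{x\in\mathbb{F}_q\\ x^2=aw}}\mathbf{e}_q(hx)\ll q^{1/2+o(1)},$$ where $o(1)\to 0$ as $q\to\infty$.
   Context: $\mathbf{e}_q(\xi)=\exp(2\pi i\xi/q)$; $\mathbb{F}_q$ is identified with $\{0,\dots,q-1\}$. The implied constant is absolute. *)

(* Defs.v *)
From Stdlib Require Import Reals ZArith List.
From Coquelicot Require Import Coquelicot.
Open Scope R_scope.

Definition eq_char (q : Z) (xi : Z) : C :=
  (cos (2 * PI * IZR xi / IZR q), sin (2 * PI * IZR xi / IZR q)).

Definition Csum (l : list C) : C := fold_right Cplus (RtoC 0) l.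

(* F_q identified with {0,...,q-1}; the inner sum over x in F_q with x^2 = a w *)
Definition inner_sum (q a h w : Z) : C :=
  Csum (map (fun x => eq_char q (h * x))
    (filter (fun x => Z.eqb ((x * x - a * w) mod q) 0)
       (map Z.of_nat (seq 0 (Z.to_nat q))))).

(* sum_{w=1}^{W} (empty if W < 1) *)
Definition S_sum (q W a h : Z) : C :=
  Csum (map (fun w => inner_sum q a h w) (map Z.of_nat (seq 1 (Z.to_nat W)))).

(* Main.v *)
Require Import Defs.
From Stdlib Require Import Reals ZArith List Znumtheory Lia Lra.
From Coquelicot Require Import Coquelicot.
Open Scope R_scope.
Fixpoint csum (n : nat) (f : nat -> C) : C :=
  match n with O => RtoC 0 | S m => Cplus (csum m f) (f m) end.
Fixpoint rsum (n : nat) (f : nat -> R) : R :=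
  match n with O => 0 | S m => rsum m f + f m end.

Lemma csum_ext n f g : (forall i, (i < n)%nat -> f i = g i) -> csum n f = csum n g.
Proof. induction n; simpl; intros H; auto. rewrite IHn by (intros; apply H; lia). rewrite H by lia. auto. Qed.
Lemma rsum_ext n f g : (forall i, (i < n)%nat -> f i = g i) -> rsum n f = rsum n g.
Proof. induction n; simpl; intros H; auto. rewrite IHn by (intros; apply H; lia). rewrite H by lia. auto. Qed.
Lemma rsum_le n f g : (forall i, (i < n)%nat -> f i <= g i) -> rsum n f <= rsum n g.
Proof. induction n; simpl; intros H; [lra|]. assert (H1 := IHn (fun i Hi => H i ltac:(lia))). assert (H2 := H n ltac:(lia)). lra. Qed.
Lemma csum_plus n f g : csum n (fun i => Cplus (f i) (g i)) = Cplus (csum n f) (csum n g).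
Proof. induction n; simpl. apply injective_projections; simpl; lra. rewrite IHn. ring. Qed.
Lemma rsum_plus n f g : rsum n (fun i => f i + g i) = rsum n f + rsum n g.
Proof. induction n; simpl. lra. rewrite IHn. ring. Qed.
Lemma csum_scal n c f : Cmult c (csum n f) = csum n (fun i => Cmult c (f i)).
Proof. induction n; simpl. apply injective_projections; simpl; lra. rewrite <- IHn. ring. Qed.
Lemma rsum_scal n c f : c * rsum n f = rsum n (fun i => c * f i).
Proof. induction n; simpl. lra. rewrite <- IHn. ring. Qed.
Lemma csum_zero n f : (forall i, (i < n)%nat -> f i = RtoC 0) -> csum n f = RtoC 0.
Proof. induction n; simpl; intros H; auto. rewrite IHn by (intros; apply H; lia). rewrite H by lia. ring. Qed.
Lemma csum_const n c : csum n (fun _ => c) = Cmult (RtoC (INR n)) c.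
Proof. induction n; simpl csum. unfold INR. ring. rewrite IHn, S_INR. rewrite RtoC_plus. ring. Qed.
Lemma csum_exchange n m (f : nat -> nat -> C) :
  csum n (fun i => csum m (fun j => f i j)) = csum m (fun j => csum n (fun i => f i j)).
Proof. induction n; simpl. symmetry; apply csum_zero; auto. rewrite IHn. rewrite <- csum_plus. auto. Qed.
Lemma Cmod_csum n f : Cmod (csum n f) <= rsum n (fun i => Cmod (f i)).
Proof. induction n; simpl. rewrite Cmod_0; lra. eapply Rle_trans. apply Cmod_triangle. lra. Qed.
Lemma csum_first n f : csum (S n) f = Cplus (f O) (csum n (fun i => f (S i))).
Proof. induction n. simpl. ring. change (csum (S (S n)) f) with (Cplus (csum (S n) f) (f (S n))). rewrite IHn. simpl. ring. Qed.
Lemma rsum_first n f : rsum (S n) f = f O + rsum n (fun i => f (S i)).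
Proof. induction n. simpl. ring. change (rsum (S (S n)) f) with (rsum (S n) f + f (S n)). rewrite IHn. simpl. ring. Qed.
Lemma rsum_rev n f : rsum n f = rsum n (fun i => f (n - 1 - i)%nat).
Proof. revert f; induction n; intros f. auto. rewrite (rsum_first n (fun i => f (S n - 1 - i)%nat)).
 change (rsum (S n) f) with (rsum n f + f n). rewrite IHn. replace (S n - 1 - 0)%nat with n by lia.
 rewrite Rplus_comm. f_equal. apply rsum_ext. intros. f_equal. lia. Qed.
Lemma rsum_nonneg n f : (forall i, (i < n)%nat -> 0 <= f i) -> 0 <= rsum n f.
Proof. intros H. assert (rsum n (fun _ => 0) = 0). { induction n; simpl; auto. rewrite IHn; try lra. intros; apply H; lia. }
 rewrite <- H0. apply rsum_le. auto. Qed.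

Lemma C_ext (x y : C) : fst x = fst y -> snd x = snd y -> x = y.
Proof. intros; apply injective_projections; auto. Qed.


Lemma e_add (q : Z) (qpos : (0 < q)%Z) m n : eq_char q (m + n) = Cmult (eq_char q m) (eq_char q n).
Proof. assert (qR : IZR q <> 0) by (apply not_0_IZR; lia). unfold eq_char. rewrite plus_IZR.
 replace (2 * PI * (IZR m + IZR n) / IZR q) with (2 * PI * IZR m / IZR q + 2 * PI * IZR n / IZR q) by (field; auto).
 apply C_ext; simpl; [rewrite cos_plus|rewrite sin_plus]; ring. Qed.

Lemma e_0 (q : Z) (qpos : (0 < q)%Z) : eq_char q 0 = RtoC 1.
Proof. assert (qR : IZR q <> 0) by (apply not_0_IZR; lia). unfold eq_char. replace (2 * PI * IZR 0 / IZR q) with 0 by (simpl; field; auto). rewrite cos_0, sin_0. auto. Qed.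

Lemma e_qnat (q : Z) (qpos : (0 < q)%Z) k : eq_char q (q * Z.of_nat k) = RtoC 1.
Proof. assert (qR : IZR q <> 0) by (apply not_0_IZR; lia). unfold eq_char. rewrite mult_IZR, <- INR_IZR_INZ.
 replace (2 * PI * (IZR q * INR k) / IZR q) with (0 + 2 * INR k * PI) by (field; auto).
 rewrite cos_period, sin_period, cos_0, sin_0. auto. Qed.

Lemma e_q (q : Z) (qpos : (0 < q)%Z) k : eq_char q (q * k) = RtoC 1.
Proof. assert (qR : IZR q <> 0) by (apply not_0_IZR; lia). destruct (Z_le_gt_dec 0 k).
 - replace k with (Z.of_nat (Z.to_nat k)) by lia. apply e_qnat; auto.
 - assert (H := e_qnat q qpos (Z.to_nat (-k))). replace (q * Z.of_nat (Z.to_nat (-k)))%Z with (- (q*k))%Z in H by lia.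
   assert (H2 := e_add q qpos (q*k) (-(q*k))). rewrite H, Z.add_opp_diag_r, (e_0 q qpos) in H2.
   rewrite H2. ring. Qed.

Lemma e_per (q : Z) (qpos : (0 < q)%Z) n k : eq_char q (n + q * k) = eq_char q n.
Proof. rewrite (e_add q qpos), (e_q q qpos). ring. Qed.

Lemma e_mod (q : Z) (qpos : (0 < q)%Z) n : eq_char q n = eq_char q (n mod q).
Proof. assert (qR : IZR q <> 0) by (apply not_0_IZR; lia). rewrite (Z.div_mod n q) at 1 by lia. rewrite Z.add_comm, Z.mul_comm, <- Z.mul_comm. 
 replace (q * (n / q) + n mod q)%Z with (n mod q + q * (n / q))%Z by ring. apply e_per; auto. Qed.

Lemma e_norm (q : Z) (qpos : (0 < q)%Z) n : Cmod (eq_char q n) = 1.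
Proof. assert (qR : IZR q <> 0) by (apply not_0_IZR; lia). unfold Cmod, eq_char. simpl fst; simpl snd. rewrite <- sqrt_1. f_equal.
 assert (H := sin2_cos2 (2 * PI * IZR n / IZR q)). unfold Rsqr in H. lra. Qed.

Lemma e_conj (q : Z) (qpos : (0 < q)%Z) n : Cconj (eq_char q n) = eq_char q (- n).
Proof. assert (qR : IZR q <> 0) by (apply not_0_IZR; lia). unfold eq_char, Cconj. rewrite opp_IZR. simpl.
 replace (2 * PI * - IZR n / IZR q) with (- (2 * PI * IZR n / IZR q)) by (field; auto).
 rewrite cos_neg, sin_neg. auto. Qed.

Lemma e_minus1 (q : Z) (qpos : (0 < q)%Z) r : (0 <= r <= q)%Z ->
  Cmod (Cminus (eq_char q r) (RtoC 1)) = 2 * sin (PI * IZR r / IZR q).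
Proof. assert (qR : IZR q <> 0) by (apply not_0_IZR; lia). intros Hr. unfold Cmod, eq_char. simpl fst; simpl snd.
 set (p := PI * IZR r / IZR q).
 replace (2 * PI * IZR r / IZR q) with (2 * p) by (unfold p; field; auto).
 rewrite cos_2a_sin, sin_2a.
 assert (0 <= sin p). { apply sin_ge_0. unfold p. apply Rmult_le_pos. apply Rmult_le_pos. left; apply PI_RGT_0.
   apply IZR_le; lia. left; apply Rinv_0_lt_compat, IZR_lt; lia.
   unfold p. apply Rmult_le_reg_r with (IZR q). apply IZR_lt; lia. unfold Rdiv. rewrite Rmult_assoc, Rinv_l; auto.
   rewrite Rmult_1_r. apply Rmult_le_compat_l. left; apply PI_RGT_0. apply IZR_le; lia. }
 transitivity (sqrt ((2 * sin p)²)); [|apply sqrt_Rsqr; lra]. f_equal.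
 unfold Rsqr. assert (H2 := sin2_cos2 p). unfold Rsqr in H2. simpl. transitivity (2*sin p*(2*sin p)*(sin p*sin p+cos p*cos p)); [ring| rewrite H2; ring]. Qed.


Lemma csum_shift1 n g : csum n (fun i => g (S i)) = Cplus (Cminus (csum n g) (g O)) (g n).
Proof. assert (H := csum_first n g). change (csum (S n) g) with (Cplus (csum n g) (g n)) in H.
 transitivity (Cminus (Cplus (g O) (csum n (fun i => g (S i)))) (g O)). ring. rewrite <- H. ring. Qed.

Lemma Cmult_eq0 (x y : C) : Cmult x y = RtoC 0 -> y <> RtoC 0 -> x = RtoC 0.
Proof. intros H Hy. apply Cmod_eq_0. assert (Cmod (Cmult x y) = 0) by (rewrite H; apply Cmod_0).
 rewrite Cmod_mult in H0. apply Cmod_gt_0 in Hy. nra. Qed.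

Lemma N_of q : (0 < q)%Z -> INR (Z.to_nat q) = IZR q.
Proof. intros. rewrite INR_IZR_INZ. f_equal. lia. Qed.

Lemma sin_pos_frac q r : (0 < r < q)%Z -> 0 < sin (PI * IZR r / IZR q).
Proof. intros H. assert (0 < IZR r) by (apply IZR_lt; lia). assert (IZR r < IZR q) by (apply IZR_lt; lia).
 assert (PI > 0) by apply PI_RGT_0. apply sin_gt_0.
 apply Rdiv_lt_0_compat; [nra|lra].
 apply Rmult_lt_reg_r with (IZR q). lra. unfold Rdiv. rewrite Rmult_assoc, Rinv_l by lra. nra. Qed.

Lemma ortho_ndiv q k : (0 < q)%Z -> (k mod q <> 0)%Z ->
  csum (Z.to_nat q) (fun i => eq_char q (k * Z.of_nat i)) = RtoC 0.
Proof. intros Hq Hk. set (SS := csum _ _).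
 assert (E : Cmult SS (Cminus (eq_char q k) (RtoC 1)) = RtoC 0).
 { assert (Cmult SS (eq_char q k) = SS).
   { unfold SS. rewrite Cmult_comm, csum_scal.
     transitivity (csum (Z.to_nat q) (fun i => (fun j => eq_char q (k * Z.of_nat j)) (S i))).
     apply csum_ext. intros. rewrite <- e_add by auto. f_equal. lia.
     rewrite (csum_shift1 _ (fun j => eq_char q (k * Z.of_nat j))). replace (k * Z.of_nat (Z.to_nat q))%Z with (q * k)%Z by lia.
     rewrite e_q by auto. replace (k * Z.of_nat 0)%Z with 0%Z by lia. rewrite e_0 by auto. ring. }
   transitivity (Cminus (Cmult SS (eq_char q k)) SS). ring. rewrite H. ring. }
 apply Cmult_eq0 in E; auto. intro H0.
 assert (P : 0 < Cmod (Cminus (eq_char q k) (RtoC 1))).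
 { rewrite (e_mod q Hq k). rewrite e_minus1. 2: lia. 2: generalize (Z.mod_pos_bound k q); lia.
   assert (0 < sin (PI * IZR (k mod q) / IZR q)). apply sin_pos_frac. generalize (Z.mod_pos_bound k q); lia. lra. }
 rewrite H0, Cmod_0 in P. lra. Qed.

Lemma ortho_div q k : (0 < q)%Z -> (k mod q = 0)%Z ->
  csum (Z.to_nat q) (fun i => eq_char q (k * Z.of_nat i)) = RtoC (IZR q).
Proof. intros Hq Hk. rewrite (csum_ext _ _ (fun _ => RtoC 1)).
 rewrite csum_const, N_of by auto. ring.
 intros. rewrite e_mod by auto. rewrite Z.mul_mod, Hk by lia. simpl. rewrite Z.mod_0_l by lia. apply e_0; auto. Qed.

Lemma csum_periodic q (f : Z -> C) y : (0 < q)%Z -> (forall x m, f (x + q * m)%Z = f x) ->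
  csum (Z.to_nat q) (fun i => f (Z.of_nat i + y)%Z) = csum (Z.to_nat q) (fun i => f (Z.of_nat i)).
Proof. intros Hq Hf.
 assert (K : forall k, csum (Z.to_nat q) (fun i => f (Z.of_nat i + Z.of_nat k)%Z) = csum (Z.to_nat q) (fun i => f (Z.of_nat i))).
 { induction k. apply csum_ext; intros; f_equal; lia.
   rewrite <- IHk. set (g := fun i => f (Z.of_nat i + Z.of_nat k)%Z).
   transitivity (csum (Z.to_nat q) (fun i => g (S i))). apply csum_ext; intros; unfold g; f_equal; lia.
   rewrite (csum_shift1 _ g). unfold g. replace (Z.of_nat (Z.to_nat q) + Z.of_nat k)%Z with (Z.of_nat 0 + Z.of_nat k + q * 1)%Z by lia.
   rewrite Hf. ring. }
 rewrite <- (K (Z.to_nat (y mod q))). apply csum_ext. intros.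
 symmetry. rewrite <- (Hf _ (y / q)%Z). f_equal. pose proof (Z.div_mod y q ltac:(lia)). generalize (Z.mod_pos_bound y q); lia. Qed.

Lemma csum_conj n f : Cconj (csum n f) = csum n (fun i => Cconj (f i)).
Proof. induction n; simpl. apply C_ext; simpl; lra. rewrite Cplus_conj, IHn. auto. Qed.

Lemma prime_nd q a : prime q -> (a mod q <> 0)%Z -> ~ (q | a)%Z.
Proof. intros Hp Ha Hd. apply Ha. apply Z.mod_divide; auto. generalize (prime_ge_2 q Hp); lia. Qed.

Lemma prime_2ci q c i : prime q -> q <> 2%Z -> (c mod q <> 0)%Z -> (0 < i < q)%Z -> ((2 * c * i) mod q <> 0)%Z.
Proof. intros Hp H2 Hc Hi Hm. assert (Hq := prime_ge_2 q Hp).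
 apply Z.mod_divide in Hm; [|lia]. apply prime_mult in Hm; auto. destruct Hm as [Hm|Hm].
 - apply prime_mult in Hm; auto. destruct Hm as [Hm|Hm].
   + apply Z.divide_pos_le in Hm; lia.
   + apply (prime_nd q c Hp Hc); auto.
 - apply Z.divide_pos_le in Hm; lia. Qed.

Lemma gauss q h c : prime q -> q <> 2%Z -> (c mod q <> 0)%Z ->
  Cmod (csum (Z.to_nat q) (fun i => eq_char q (h * Z.of_nat i + c * Z.of_nat i * Z.of_nat i))) = sqrt (IZR q).
Proof. intros Hp H2 Hc. assert (Hq := prime_ge_2 q Hp). assert (Hq0 : (0 < q)%Z) by lia.
 set (N := Z.to_nat q).
 set (G := csum N _).
 assert (GG : Cmult G (Cconj G) = RtoC (IZR q)).
 { unfold G at 2. rewrite csum_conj, csum_scal.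
   set (F := fun (j : nat) (x : Z) => eq_char q (h * (x - Z.of_nat j) + c * (x * x - Z.of_nat j * Z.of_nat j))).
   transitivity (csum N (fun j => csum N (fun i => F j (Z.of_nat i)))).
   { apply csum_ext. intros j _. unfold G. rewrite Cmult_comm, csum_scal. apply csum_ext. intros i _.
     rewrite e_conj by auto. rewrite <- e_add by auto. unfold F. f_equal. ring. }
   transitivity (csum N (fun j => csum N (fun i => Cmult (eq_char q (h * Z.of_nat i + c * Z.of_nat i * Z.of_nat i))
                                                    (eq_char q ((2 * c * Z.of_nat i) * Z.of_nat j))))).
   { apply csum_ext. intros j _. unfold N. rewrite <- (csum_periodic q (F j) (Z.of_nat j)); auto.
     apply csum_ext. intros i _. unfold F. rewrite <- e_add by auto. f_equal. ring.
     intros x m. unfold F. rewrite <- (e_per q Hq0 (h * (x - Z.of_nat j) + c * (x * x - Z.of_nat j * Z.of_nat j)) (h * m + c * (2 * x * m + q * m * m))). f_equal. ring. }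
   rewrite csum_exchange.
   transitivity (csum N (fun i => Cmult (eq_char q (h * Z.of_nat i + c * Z.of_nat i * Z.of_nat i))
                   (csum N (fun j => eq_char q ((2 * c * Z.of_nat i) * Z.of_nat j))))).
   { apply csum_ext. intros i _. rewrite csum_scal. auto. }
   assert (HN : N = S (N - 1)) by (unfold N; lia). rewrite HN at 1. rewrite csum_first.
   rewrite (csum_ext (N - 1) _ (fun _ => RtoC 0)).
   2: { intros i Hi. unfold N. rewrite ortho_ndiv; auto. ring. apply prime_2ci; auto. unfold N in Hi. lia. }
   rewrite (csum_zero (N - 1) (fun _ => RtoC 0)) by auto.
   unfold N. rewrite ortho_div by (auto; simpl; rewrite Z.mul_0_r; apply Z.mod_0_l; lia). simpl Z.of_nat.
   replace (h * 0 + c * 0 * 0)%Z with 0%Z by ring. rewrite e_0 by auto. ring. }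
 assert (Cmod G ^ 2 = IZR q). { assert (H := Cmod2_conj G). rewrite GG in H. apply (f_equal fst) in H. simpl in H. simpl. lra. }
 rewrite <- H. rewrite <- (sqrt_pow2 (Cmod G)) at 1 by apply Cmod_ge_0. auto. Qed.

Lemma sin_lower a : 0 <= a -> a <= 2 -> a - a^3/6 <= sin a.
Proof. intros H0 H2. assert (HP : 3/2 < PI/2) by apply PI2_3_2. destruct (sin_bound a 0 H0 ltac:(lra)) as [H _].
 eapply Rle_trans; [|exact H]. unfold sin_approx, sin_term. simpl. right. field. Qed.

Lemma sin_frac_lb q t : (0 < t)%Z -> (2 * t <= q)%Z -> IZR t / IZR q <= sin (PI * IZR t / IZR q).
Proof. intros Ht Htq. assert (HP : 3/2 < PI/2) by apply PI2_3_2. assert (HP4 := PI_4).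
 assert (Tq : 0 < IZR t) by (apply IZR_lt; lia). assert (Q2 : 2 * IZR t <= IZR q) by (rewrite <- mult_IZR; apply IZR_le; lia).
 set (u := IZR t / IZR q). assert (0 < u) by (unfold u; apply Rdiv_lt_0_compat; lra).
 assert (u <= 1/2) by (unfold u; apply Rmult_le_reg_r with (IZR q); [lra|]; unfold Rdiv; rewrite Rmult_assoc, Rinv_l by lra; lra).
 replace (PI * IZR t / IZR q) with (PI * u) by (unfold u; field; lra).
 assert (PI * u <= 2) by nra.
 eapply Rle_trans; [|apply sin_lower; nra].
 assert (PI * u * (1 - (PI*u)^2/6) >= PI * u * (1/3)).
 { assert (0 <= PI * u) by nra. assert (PI * u * (PI * u) <= 4) by nra.
   apply Rle_ge, Rmult_le_compat_l. lra. simpl. lra. }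
 simpl in *. nra. Qed.

Lemma inv_sin_bound q t : (0 < t < q)%Z ->
  / sin (PI * IZR t / IZR q) <= IZR q / IZR t + IZR q / IZR (q - t).
Proof. intros Ht. assert (Qp : 0 < IZR q) by (apply IZR_lt; lia).
 assert (T1 : 0 < IZR t) by (apply IZR_lt; lia). assert (T2 : 0 < IZR (q - t)) by (apply IZR_lt; lia).
 assert (A1 : 0 <= IZR q / IZR t) by (left; apply Rdiv_lt_0_compat; lra).
 assert (A2 : 0 <= IZR q / IZR (q - t)) by (left; apply Rdiv_lt_0_compat; lra).
 destruct (Z_le_gt_dec (2 * t) q).
 - assert (H := sin_frac_lb q t ltac:(lia) ltac:(lia)).
   assert (P : 0 < IZR t / IZR q) by (apply Rdiv_lt_0_compat; lra).
   eapply Rle_trans; [apply Rinv_le_contravar; [exact P| exact H]|].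
   rewrite Rinv_div. lra.
 - assert (H := sin_frac_lb q (q - t) ltac:(lia) ltac:(lia)).
   replace (PI * IZR (q - t) / IZR q) with (PI - PI * IZR t / IZR q) in H by (rewrite minus_IZR; field; lra).
   rewrite sin_PI_x in H.
   assert (P : 0 < IZR (q - t) / IZR q) by (apply Rdiv_lt_0_compat; lra).
   eapply Rle_trans; [apply Rinv_le_contravar; [exact P| exact H]|].
   rewrite Rinv_div. lra. Qed.

Lemma geom q t W : (0 < t < q)%Z ->
  Cmod (csum W (fun j => eq_char q (t * Z.of_nat (S j)))) <= / sin (PI * IZR t / IZR q).
Proof. intros Ht. assert (Hq : (0 < q)%Z) by lia.
 set (g := fun j => eq_char q (t * Z.of_nat (S j))).
 set (A := csum W g).
 assert (E : Cmult A (Cminus (eq_char q t) (RtoC 1)) = Cminus (g W) (g O)).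
 { assert (Cmult A (eq_char q t) = csum W (fun j => g (S j))).
   { unfold A. rewrite Cmult_comm, csum_scal. apply csum_ext. intros. unfold g. rewrite <- e_add by auto. f_equal. lia. }
   rewrite csum_shift1 in H. transitivity (Cminus (Cmult A (eq_char q t)) A). ring. rewrite H. fold A. ring. }
 assert (M : Cmod A * (2 * sin (PI * IZR t / IZR q)) <= 2).
 { rewrite <- e_minus1 by lia. rewrite <- Cmod_mult, E. unfold Cminus. eapply Rle_trans. apply Cmod_triangle.
   rewrite Cmod_opp. unfold g. rewrite !e_norm by auto. lra. }
 assert (S0 := sin_pos_frac q t Ht).
 apply Rmult_le_reg_r with (2 * sin (PI * IZR t / IZR q)). lra.
 replace (/ sin (PI * IZR t / IZR q) * (2 * sin (PI * IZR t / IZR q))) with 2 by (field; lra). auto. Qed.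

Lemma ln_le_sub1 y : 0 < y -> ln y <= y - 1.
Proof. intros Hy. assert (H := exp_ineq1_le (ln y)). rewrite exp_ln in H by auto. lra. Qed.

Lemma harm m : (1 <= m)%nat -> rsum m (fun i => / INR (S i)) <= 1 + ln (INR m).
Proof. induction m; intros Hm. lia. destruct m.
 - simpl. rewrite ln_1. lra.
 - change (rsum (S (S m)) (fun i => / INR (S i))) with (rsum (S m) (fun i => / INR (S i)) + / INR (S (S m))).
   assert (H := IHm ltac:(lia)).
   assert (P : 0 < INR (S m)) by (apply lt_0_INR; lia).
   assert (E : INR (S (S m)) = INR (S m) + 1) by (rewrite S_INR; auto).
   assert (L := ln_le_sub1 (INR (S m) / INR (S (S m))) ltac:(apply Rdiv_lt_0_compat; lra)).
   rewrite ln_div in L by lra. rewrite E in *.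
   replace (INR (S m) / (INR (S m) + 1) - 1) with (- / (INR (S m) + 1)) in L by (field; lra). lra. Qed.

Lemma ln_le_pow x eps : 1 <= x -> 0 < eps -> ln x <= Rpower x eps / eps.
Proof. intros Hx He. unfold Rpower. assert (H := exp_ineq1_le (eps * ln x)).
 apply Rmult_le_reg_r with eps; auto. unfold Rdiv. rewrite Rmult_assoc, Rinv_l by lra.
 assert (0 <= ln x) by (rewrite <- ln_1; apply ln_le; lra). lra. Qed.

Lemma Csum_seq (g : Z -> C) s n : Csum (map g (map Z.of_nat (seq s n))) = csum n (fun i => g (Z.of_nat (s + i))).
Proof. revert s; induction n; intros s. auto. simpl seq. simpl map. simpl Csum. rewrite csum_first. rewrite IHn.
 rewrite Nat.add_0_r. f_equal. apply csum_ext. intros. f_equal. f_equal. lia. Qed.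

Lemma Csum_filter (g : Z -> C) p l : Csum (map g (filter p l)) = Csum (map (fun x => if p x then g x else RtoC 0) l).
Proof. induction l; simpl. auto. destruct (p a); simpl; rewrite IHl; auto. ring. Qed.

Lemma rsum_const n c : rsum n (fun _ => c) = INR n * c.
Proof. induction n; simpl rsum. simpl; ring. rewrite IHn, S_INR. ring. Qed.

Lemma indic q a b x w : (0 < q)%Z -> (q | a * b - 1)%Z ->
  (((x * x - a * w) mod q = 0) <-> ((w - b * x * x) mod q = 0))%Z.
Proof. intros Hq [k Hk]. rewrite !Z.mod_divide by lia. split; intros [m Hm].
 - exists (- b * m - k * w)%Z. replace (w - b*x*x)%Z with (- b * (x*x - a*w) - (a*b - 1) * w)%Z by ring. rewrite Hm, Hk. ring.
 - exists (- a * m - k * x * x)%Z. replace (x*x - a*w)%Z with (- a * (w - b*x*x) - (a*b - 1) * x * x)%Z by ring. rewrite Hm, Hk. ring. Qed.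

Lemma indic_sum q a b h x w : (0 < q)%Z -> (q | a * b - 1)%Z ->
  (if Z.eqb ((x * x - a * w) mod q) 0 then eq_char q (h * x) else RtoC 0) =
  Cmult (RtoC (/ IZR q)) (csum (Z.to_nat q) (fun t => Cmult (eq_char q (Z.of_nat t * w))
        (eq_char q (h * x + (- (b * Z.of_nat t)) * x * x)))).
Proof. intros Hq Hd. assert (qR : IZR q <> 0) by (apply not_0_IZR; lia).
 rewrite (csum_ext _ _ (fun t => Cmult (eq_char q ((w - b * x * x) * Z.of_nat t)) (eq_char q (h * x)))).
 2: { intros. rewrite <- !e_add by auto. f_equal. ring. }
 rewrite <- (csum_ext _ (fun t => Cmult (eq_char q (h * x)) (eq_char q ((w - b * x * x) * Z.of_nat t)))) by (intros; apply Cmult_comm).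
 rewrite <- csum_scal.
 destruct (Z.eqb_spec ((x * x - a * w) mod q) 0) as [E|E].
 - rewrite ortho_div; auto. 2: apply (indic q a b x w); auto.
   transitivity (Cmult (eq_char q (h * x)) (RtoC (/ IZR q * IZR q))). rewrite Rinv_l by auto. ring.
   rewrite RtoC_mult. ring.
 - rewrite ortho_ndiv; auto. ring. rewrite <- (indic q a b x w); auto. Qed.

Lemma csum_prod n m c f g : csum n (fun j => csum m (fun i => Cmult c (Cmult (f j) (g i)))) = Cmult c (Cmult (csum n f) (csum m g)).
Proof. induction n; cbn [csum]. ring. rewrite IHn.
 rewrite (csum_ext m (fun i => Cmult c (Cmult (f n) (g i))) (fun i => Cmult (Cmult c (f n)) (g i))) by (intros; ring).
 rewrite <- (csum_scal m (Cmult c (f n)) g). ring. Qed.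

Lemma main_identity q W a h b : (0 < q)%Z -> (q | a * b - 1)%Z ->
  S_sum q W a h = Cmult (RtoC (/ IZR q)) (csum (Z.to_nat q) (fun t =>
     Cmult (csum (Z.to_nat W) (fun j => eq_char q (Z.of_nat t * Z.of_nat (S j))))
           (csum (Z.to_nat q) (fun i => eq_char q (h * Z.of_nat i + (- (b * Z.of_nat t)) * Z.of_nat i * Z.of_nat i))))).
Proof. intros Hq Hd. unfold S_sum. rewrite Csum_seq.
 set (N := Z.to_nat q).
 transitivity (csum (Z.to_nat W) (fun j => csum N (fun i => csum N (fun t =>
   Cmult (RtoC (/ IZR q)) (Cmult (eq_char q (Z.of_nat t * Z.of_nat (S j)))
        (eq_char q (h * Z.of_nat i + (- (b * Z.of_nat t)) * Z.of_nat i * Z.of_nat i))))))).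
 { apply csum_ext. intros j _. unfold inner_sum. rewrite Csum_filter, Csum_seq. apply csum_ext. intros i _.
   rewrite (indic_sum q a b h); auto. rewrite csum_scal. simpl (0 + i)%nat. simpl (1 + j)%nat. auto. }
 rewrite csum_scal.
 rewrite (csum_ext (Z.to_nat W) _ (fun j => csum N (fun t => csum N (fun i =>
   Cmult (RtoC (/ IZR q)) (Cmult (eq_char q (Z.of_nat t * Z.of_nat (S j)))
        (eq_char q (h * Z.of_nat i + (- (b * Z.of_nat t)) * Z.of_nat i * Z.of_nat i))))))).
 2: { intros. apply csum_exchange. }
 rewrite csum_exchange. apply csum_ext. intros t _. apply csum_prod. Qed.

Lemma bound_odd q W a h b : prime q -> q <> 2%Z -> (q | a * b - 1)%Z -> (h mod q <> 0)%Z ->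
  Cmod (S_sum q W a h) <= 2 * sqrt (IZR q) * (1 + ln (IZR q)).
Proof. intros Hp H2 Hd Hh. assert (Hq2 := prime_ge_2 q Hp). assert (Hq : (0 < q)%Z) by lia.
 assert (Qp : 0 < IZR q) by (apply IZR_lt; lia).
 assert (Hb : forall k, (0 < k < q)%Z -> ((- (b * k)) mod q <> 0)%Z).
 { intros k Hk Hm. apply Z.mod_divide in Hm; [|lia]. rewrite Z.divide_opp_r in Hm.
   apply prime_mult in Hm; auto. destruct Hm as [Hm|Hm].
   - assert (q | 1)%Z. { replace 1%Z with (a * b - (a * b - 1))%Z by ring. apply Z.divide_sub_r; auto.
       apply Z.divide_mul_r; auto. }
     apply Z.divide_pos_le in H; lia.
   - apply Z.divide_pos_le in Hm; lia. }
 rewrite (main_identity q W a h b Hq Hd). rewrite Cmod_mult, Cmod_R, Rabs_pos_eq by (left; apply Rinv_0_lt_compat; auto).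
 set (N := Z.to_nat q).
 assert (HN : N = S (N - 1)) by (unfold N; lia).
 set (T := fun t : nat => Cmult (csum (Z.to_nat W) (fun j => eq_char q (Z.of_nat t * Z.of_nat (S j))))
           (csum N (fun i => eq_char q (h * Z.of_nat i + (- (b * Z.of_nat t)) * Z.of_nat i * Z.of_nat i)))).
 assert (B : rsum N (fun t => Cmod (T t)) <= IZR q * sqrt (IZR q) * (2 * (1 + ln (IZR q)))).
 { rewrite HN at 1. rewrite rsum_first.
   assert (T0 : Cmod (T O) = 0).
   { unfold T. rewrite (csum_ext N _ (fun i => eq_char q (h * Z.of_nat i))). unfold N. rewrite ortho_ndiv; auto.
     rewrite Cmult_0_r, Cmod_0. auto. intros. f_equal. simpl. ring. }
   rewrite T0, Rplus_0_l.
   eapply Rle_trans. apply (rsum_le _ _ (fun t => sqrt (IZR q) * IZR q * (/ INR (S t) + / INR (S (N - 1 - 1 - t))))).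
   { intros t Ht. unfold T. rewrite Cmod_mult. unfold N. rewrite gauss; auto. 2: apply Hb; unfold N in Ht; lia.
     assert (Hs := sqrt_lt_R0 (IZR q) Qp).
     rewrite Rmult_comm, Rmult_assoc. apply Rmult_le_compat_l. lra.
     eapply Rle_trans. apply geom. unfold N in Ht; lia.
     eapply Rle_trans. apply inv_sin_bound. unfold N in Ht; lia.
     rewrite <- !INR_IZR_INZ. replace (IZR (q - Z.of_nat (S t))) with (INR (S (Z.to_nat q - 1 - 1 - t))).
     right. field. split; apply not_0_INR; lia.
     rewrite INR_IZR_INZ. f_equal. lia. }
   rewrite <- rsum_scal, rsum_plus. rewrite <- (rsum_rev (N - 1) (fun i => / INR (S i))).
   assert (HH := harm (N - 1) ltac:(unfold N; lia)).
   assert (L : ln (INR (N - 1)) <= ln (IZR q)).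
   { apply ln_le. apply lt_0_INR; unfold N; lia. rewrite INR_IZR_INZ. apply IZR_le. unfold N; lia. }
   assert (Hs := sqrt_lt_R0 (IZR q) Qp).
   assert (0 <= sqrt (IZR q) * IZR q) by nra. nra. }
 assert (0 < / IZR q) by (apply Rinv_0_lt_compat; auto).
 eapply Rle_trans. apply Rmult_le_compat_l. lra. apply Cmod_csum. fold N. fold T.
 eapply Rle_trans. apply Rmult_le_compat_l. lra. exact B.
 right. field. lra. Qed.

Lemma trivial_bound q W a h : (0 < q)%Z -> Cmod (S_sum q W a h) <= INR (Z.to_nat W) * IZR q.
Proof. intros Hq. unfold S_sum. rewrite Csum_seq. eapply Rle_trans. apply Cmod_csum.
 rewrite <- rsum_const. apply rsum_le. intros j _. unfold inner_sum. rewrite Csum_filter, Csum_seq.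
 eapply Rle_trans. apply Cmod_csum. rewrite <- (N_of q) by auto. rewrite <- (Rmult_1_r (INR _)), <- rsum_const.
 apply rsum_le. intros i _. destruct (_ =? _)%Z. rewrite e_norm by auto. lra. rewrite Cmod_0. lra. Qed.

Theorem lemma3p2 :
  forall eps : R, 0 < eps ->
  exists K : R, 0 < K /\
  forall q W a h : Z,
    prime q -> (W <= q)%Z -> Z.gcd (a * h) q = 1%Z ->
    Cmod (S_sum q W a h) <= K * Rpower (IZR q) (1/2 + eps).
Proof. intros eps He. exists (2 * (1 + / eps) + 4). assert (0 < / eps) by (apply Rinv_0_lt_compat; auto).
 split. lra. intros q W a h Hp HW Hg.
 assert (Hq2 := prime_ge_2 q Hp). assert (Hq : (0 < q)%Z) by lia.
 assert (Qp : 1 <= IZR q) by (apply IZR_le; lia).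
 assert (NA : ~ (q | a)%Z).
 { intros Hd. assert (q | Z.gcd (a * h) q)%Z. apply Z.gcd_greatest. apply Z.divide_mul_l; auto. apply Z.divide_refl.
   rewrite Hg in H0. apply Z.divide_pos_le in H0; lia. }
 assert (NH : (h mod q <> 0)%Z).
 { intros Hm. apply Z.mod_divide in Hm; [|lia]. assert (q | Z.gcd (a * h) q)%Z. apply Z.gcd_greatest. apply Z.divide_mul_r; auto. apply Z.divide_refl.
   rewrite Hg in H0. apply Z.divide_pos_le in H0; lia. }
 destruct (rel_prime_bezout _ _ (prime_rel_prime q Hp a NA)) as [u v Huv].
 assert (Hd : (q | a * v - 1)%Z) by (exists (- u)%Z; lia).
 set (R0 := Rpower (IZR q) eps).
 assert (R1 : 1 <= R0). { unfold R0. rewrite <- (Rpower_O (IZR q)) by lra. apply Rle_Rpower; lra. }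
 replace (Rpower (IZR q) (1 / 2 + eps)) with (sqrt (IZR q) * R0).
 2: { rewrite Rpower_plus. unfold R0. rewrite <- Rpower_sqrt by lra. f_equal. f_equal. field. }
 assert (S1 : 1 <= sqrt (IZR q)). { rewrite <- sqrt_1. apply sqrt_le_1_alt. lra. }
 destruct (Z.eq_dec q 2) as [E|E].
 - eapply Rle_trans. apply trivial_bound; auto.
   assert (INR (Z.to_nat W) <= 2). { rewrite INR_IZR_INZ. apply IZR_le. lia. }
   assert (Q2 : IZR q = 2) by (rewrite E; auto). assert (0 <= INR (Z.to_nat W)) by apply pos_INR.
   assert (1 <= sqrt (IZR q) * R0). { rewrite <- (Rmult_1_r 1). apply Rmult_le_compat; lra. }
   rewrite Q2. apply Rle_trans with (2 * (1 + / eps) + 4). assert (INR (Z.to_nat W) * 2 <= 4) by lra. assert (4 <= 2 * (1 + / eps) + 4) by lra. lra.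
   rewrite <- (Rmult_1_r (2 * (1 + / eps) + 4)) at 1. apply Rmult_le_compat_l; [lra| rewrite <- Q2; lra].
 - eapply Rle_trans. apply (bound_odd q W a h v); auto.
   assert (L := ln_le_pow (IZR q) eps Qp He). fold R0 in L.
   assert (ln (IZR q) <= R0 * / eps) by (unfold Rdiv in L; auto).
   assert (1 + ln (IZR q) <= R0 * (1 + / eps)) by nra.
   assert (0 <= sqrt (IZR q)) by lra.
   assert (2 * sqrt (IZR q) * (1 + ln (IZR q)) <= 2 * sqrt (IZR q) * (R0 * (1 + / eps))) by nra.
   assert (0 <= sqrt (IZR q) * R0) by nra. nra. Qed.
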